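(* Let $m \ge 1$ be odd, $n\ge1$ with $\gcd(m,4n)=1$, and $r \in \mathbb{Z}$ with $r^{4n}\equiv 1 \bmod m$. Let $G = \langle u,v \mid u^m = v^{4n} = 1,\ vuv^{-1} = u^r\rangle$. Then for $a \ge 2$, $G$ has a quotient isomorphic to $Q_{4a}$ if and only if $a \mid m$ and $r \equiv -1 \bmod a$.
   Context: $Q_{4a} = \langle x,y\mid x^a=y^2, yxy^{-1}=x^{-1}\rangle$ is the generalised quaternion group of order $4a$. *)

(* Defs.v *)
From mathcomp Require Import all_boot all_order all_algebra all_fingroup.
Set Implicit Arguments. Unset Strict Implicit. Unset Printing Implicit Defensive.
Import GRing.Theory.
Local Open Scope group_scope.

(* Q \is_Q4 a : Q is isomorphic to the generalised quaternion group
   Q_{4a} = < x, y | x^a = y^2, y x y^-1 = x^-1 >.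
   (In MathComp, x ^ g = g^-1 x g, so y x y^-1 = x ^ y^-1.) *)
Definition is_Q4 (a : nat) (gT : finGroupType) (Q : {group gT}) : Prop :=
  Q \isog Grp (x : y : (x ^+ a = y ^+ 2, x ^ y^-1 = x^-1)).

(* Q is a homomorphic image (quotient) of
   G = < u, v | u^m = v^(4n) = 1, v u v^-1 = u^r >, with r an integer:
   u^r is u^+k for r = k >= 0 and u^-(k+1) for r = -(k+1). *)
Definition is_quot_G (m n : nat) (r : int) (gT : finGroupType) (Q : {set gT}) : bool :=
  match r with
  | Posz k => Q \homg Grp (u : v : (u ^+ m, v ^+ (4 * n), u ^ v^-1 = u ^+ k))
  | Negz k => Q \homg Grp (u : v : (u ^+ m, v ^+ (4 * n), u ^ v^-1 = u ^- k.+1))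
  end.

(* Main.v *)
Require Import Defs.
From mathcomp Require Import all_boot all_order all_algebra all_fingroup.
From mathcomp Require Import cyclic extremal zify.
Import GRing.Theory.
Set Implicit Arguments. Unset Strict Implicit.
Local Open Scope group_scope.

Lemma conj_comm (gT : finGroupType) (x y : gT) : commute x y -> x ^ y = x.
Proof. by rewrite conjgE => ->; rewrite mulKg. Qed.

Lemma comm_conj (gT : finGroupType) (x y : gT) : x ^ y = x -> commute x y.
Proof. by rewrite conjgE => h; rewrite /commute -{2}h mulKVg. Qed.

Lemma inv2 (gT : finGroupType) (y : gT) : y ^+ 2 = 1 -> y^-1 = y.
Proof. by move=> y2; apply/eqP; rewrite eq_invg_mul -y2. Qed.

Lemma card_mul_le (gT : finGroupType) (G K : {group gT}) : (#|(G * K)%g| <= #|G| * #|K|)%N.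
Proof. by rewrite mul_cardG leq_pmulr // cardG_gt0. Qed.

Lemma dih_key (gT : finGroupType) (H : {group gT}) (a m : nat) (x y u v : gT) :
  (1 < a)%N -> #|H| = a.*2 -> <[x]> <*> <[y]> = H -> x ^+ a = 1 -> y ^+ 2 = 1 ->
  x ^ y = x^-1 ->
  odd m -> <[u]> <*> <[v]> = H -> u ^+ m = 1 -> #[u] = a /\ u ^ v^-1 = u^-1.
Proof.
move=> a1 oH defH xa y2 xy om defUV um.
have nXY : <[y]> \subset 'N(<[x]>) by rewrite norms_cycle xy groupV cycle_id.
have defXY : <[x]> * <[y]> = H by rewrite -norm_joinEr.
have oy : (#[y] <= 2)%N by rewrite dvdn_leq // order_dvdn y2.
have ox : (#[x] %| a)%N by rewrite order_dvdn xa.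
have oxa : #[x] = a.
  have h1 := card_mul_le <[x]> <[y]>; rewrite defXY oH -!orderE in h1.
  have h2 : (#[x] * #[y] <= #[x] * 2)%N by rewrite leq_mul.
  have h3 := dvdn_leq (ltnW a1) ox. lia.
have notsub : ~ (H \subset <[x]>).
  move/subset_leq_card; rewrite oH -orderE oxa; lia.
have yV := inv2 y2.
have out z : z \in H -> z \notin <[x]> -> z ^+ 2 = 1 /\ x ^ z = x^-1.
  rewrite -defXY => /mulsgP[_ _ /cycleP[i ->] /cycleP[j ->] ->].
  rewrite -(expg_mod _ y2) modn2; case: (odd j) => /=; last first.
    by rewrite mulg1 mem_cycle.
  move=> _; split.
    rewrite expgS expg1 -!mulgA (mulgA y) -{1}yV -mulgA -conjgE conjXg xy.
    by rewrite expgVn mulgV.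
  rewrite expg1 conjgM (@conj_comm _ x (x ^+ i)) ?xy //; exact: commuteX.
have Hu : u \in H by rewrite -defUV mem_gen // inE cycle_id.
have Hv : v \in H by rewrite -defUV mem_gen // inE cycle_id orbT.
have uX : u \in <[x]>.
  case: (boolP (u \in <[x]>)) => // uX'.
  have [u2 _] := out u Hu uX'.
  have : (#[u] %| gcdn 2 m)%N by rewrite dvdn_gcd !order_dvdn u2 um !eqxx.
  have -> : gcdn 2 m = 1%N by apply/eqP; rewrite -/(coprime 2 m) coprime2n.
  by rewrite dvdn1 order_eq1 => /eqP u1; rewrite u1 group1 in uX'.
have vX : v \notin <[x]>.
  apply/negP => vX; apply: notsub; rewrite -defUV join_subG !cycle_subG uX vX.
  done.
have [v2 xv] := out v Hv vX.
have uv : u ^ v^-1 = u^-1.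
  case/cycleP: uX => i eu; subst u; by rewrite (inv2 v2) conjXg xv expgVn.
split=> //.
have nUV : <[v]> \subset 'N(<[u]>) by rewrite norms_cycle -(inv2 v2) uv groupV cycle_id.
have defUV' : <[u]> * <[v]> = H by rewrite -norm_joinEr.
have h1 := card_mul_le <[u]> <[v]>; rewrite defUV' oH -!orderE in h1.
have ov : (#[v] <= 2)%N by rewrite dvdn_leq // order_dvdn v2.
have h2 : (#[u] * #[v] <= #[u] * 2)%N by rewrite leq_mul.
have h3 : (#[u] %| a)%N by rewrite -oxa orderE order_dvdG.
have h4 := dvdn_leq (ltnW a1) h3. lia.
Qed.
Lemma modPos (k a : nat) : (Posz k = -1 %[mod a%:Z])%Z <-> (a %| k.+1)%N.
Proof.
have e : (a %| k.+1)%N = (Posz k == -1 %[mod a%:Z])%Z.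
  rewrite eqz_mod_dvd dvdzE; congr (_ %| _); lia.
by rewrite e; split => /eqP.
Qed.
Lemma modNeg (k a : nat) : (Negz k = -1 %[mod a%:Z])%Z <-> (a %| k)%N.
Proof.
have e : (a %| k)%N = (Negz k == -1 %[mod a%:Z])%Z.
  rewrite eqz_mod_dvd dvdzE; congr (_ %| _); lia.
by rewrite e; split => /eqP.
Qed.

Theorem lemma1p6 (m n : nat) (r : int) :
  odd m -> (0 < n)%N -> coprime m (4 * n) ->
  (r ^+ (4 * n) = 1 %[mod m%:Z])%Z ->
  forall a : nat, (2 <= a)%N ->
  ((exists (gT : finGroupType) (Q : {group gT}), is_Q4 a Q /\ is_quot_G m n r Q)
   <-> ((a %| m)%N /\ (r = -1 %[mod a%:Z])%Z)).
Proof.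
move=> om n0 cop rpow a a2; split.
- case=> gT [Q [isoQ qQ]].
  have hD := Grp_dihedral a2.
  case/existsP: (isoGrp_hom hD) => -[x y] /eqP [defD xa y2 xy].
  have homD : [set: dihedral_gtype a.*2] \homg Q.
    rewrite (isoQ _ [set: dihedral_gtype a.*2]%G).
    apply/existsP; exists (x, y).
    by rewrite /= !xpair_eqE defD xa y2 (inv2 y2) xy !eqxx.
  case: r rpow qQ => k _ qQ /=; have := homGrp_trans homD qQ;
    case/existsP => -[u v] /eqP [defUV um v4n uv];
    have [ou uvi] := dih_key a2 (card_dihedral a2) defD xa y2 xy om defUV um;
    (split; first by rewrite -ou order_dvdn um).
    by apply/modPos; rewrite -ou order_dvdn expgS -uv uvi mulgV.
  apply/modNeg; rewrite -ou order_dvdn.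
  move: uv; rewrite uvi => /invg_inj; rewrite expgS => /eqP.
  by rewrite -{1}[u]mulg1 (inj_eq (mulgI u)) eq_sym.
- move=> [adm rmod]; have oa : odd a := dvdn_odd adm om.
  have iso := @Grp_ext_dihedral a a2 4 isT isT.
  set E := Extremal.gtype a 4 a.-1 in iso *.
  case/existsP: (isoGrp_hom iso) => -[u v] /eqP [defE ua v4 uv].
  have uvi : u ^ v^-1 = u^-1.
    have := conjgK v u; rewrite uv conjVg => /(congr1 invg); rewrite invgK.
    done.
  exists E, [set: E]%G; split.
  + apply: intro_isoGrp.
    * apply/existsP; exists (u * v^+2, v); rewrite /= !xpair_eqE.
      have cuv2 : commute u (v^+2).
        by apply: comm_conj; rewrite expgS expg1 conjgM uv conjVg uv invgK.
      have v22 : (v^+2)^+2 = 1 by rewrite -expgM; exact: v4.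
      apply/and3P; split.
      - rewrite eqEsubset subsetT /= -defE join_subG !cycle_subG.
        have J1 : u * v^+2 \in <[u * v^+2]> <*> <[v]> by rewrite mem_gen // inE cycle_id.
        have J2 : v \in <[u * v^+2]> <*> <[v]> by rewrite mem_gen // inE cycle_id orbT.
        have J3 : (v^+2)^-1 \in <[u * v^+2]> <*> <[v]> by rewrite groupV groupX.
        by rewrite J2 andbT; have := groupM J1 J3; rewrite mulgK.
      - have ha : (a %% 2 = 1)%N by rewrite modn2 oa.
        have h24 : ((2 * a) %% 4 = 2)%N by lia.
        have e2 : v ^+ (2 * a) = v ^+ 2 by rewrite -(expg_mod (2 * a) v4) h24.
        by rewrite expgMn // ua mul1g -expgM e2.
      - rewrite conjMg uvi conj_comm; last first.
          apply: commuteV; apply: commute_sym; apply: commuteX; exact: commute_refl.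
        rewrite invMg (inv2 v22); apply/eqP.
        exact: commute_sym (commuteV (commute_sym cuv2)).
    * move=> rT K hK; rewrite (iso _ K).
      case/existsP: hK => -[x y] /eqP [defK xay2 xy].
      have xy' : x ^ y = x^-1.
        have := conjgKV y x; rewrite xy conjVg => /(congr1 invg); rewrite invgK.
        done.
      have h : (x^+a)^(y^-1) = x^+a.
        rewrite xay2 conj_comm //.
        apply: commuteV; apply: commute_sym; apply: commuteX; exact: commute_refl.
      rewrite conjXg xy expgVn in h.
      have xa2 : x ^+ (a * 2) = 1 by rewrite expgM expgS expg1 -{1}h mulVg.
      have y4 : y ^+ 4 = 1.
        have -> : 4%N = (2 * 2)%N by [].
        by rewrite expgM -xay2 -expgM xa2.
      apply/existsP; exists (x^+2, y); rewrite /= !xpair_eqE; apply/and4P; split.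
      - rewrite -defK eqEsubset !join_subG !cycle_subG.
        have h2 : (2 * (a.+1)./2 = a.+1)%N.
          by rewrite mul2n -{2}(odd_double_half a.+1) /= oa.
        have ex : x = (y^+2)^-1 * (x^+2)^+(a.+1)./2.
          by rewrite -expgM h2 expgSr -xay2 mulKg.
        have K1 : x \in <[x]> <*> <[y]> by rewrite mem_gen // inE cycle_id.
        have K2 : y \in <[x]> <*> <[y]> by rewrite mem_gen // inE cycle_id orbT.
        have L1 : x ^+ 2 \in <[x ^+ 2]> <*> <[y]> by rewrite mem_gen // inE cycle_id.
        have L2 : y \in <[x ^+ 2]> <*> <[y]> by rewrite mem_gen // inE cycle_id orbT.
        have L3 : x \in <[x ^+ 2]> <*> <[y]>.
          have L4 : (y^+2)^-1 \in <[x ^+ 2]> <*> <[y]> by rewrite groupV groupX.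
          have L5 : (x^+2)^+(a.+1)./2 \in <[x ^+ 2]> <*> <[y]> by rewrite groupX.
          by have := groupM L4 L5; rewrite -ex.
        by rewrite K2 L2 L3 groupX.
      - by rewrite -expgM mulnC xa2.
      - by rewrite y4.
      - by rewrite conjXg xy' expgVn.
  + case: r rpow rmod => k _ rmod /=.
    * have kd := (modPos k a).1 rmod.
      apply/existsP; exists (u, v); rewrite /= !xpair_eqE; apply/and4P; split.
      - by rewrite defE.
      - by rewrite -order_dvdn (dvdn_trans _ adm) // order_dvdn ua.
      - by rewrite expgM v4 expg1n.
      - rewrite uvi eq_invg_mul -expgS -order_dvdn (dvdn_trans _ kd) //.
        by rewrite order_dvdn ua.
    * have kd := (modNeg k a).1 rmod.
      have uk : u ^+ k = 1.
        by apply/eqP; rewrite -order_dvdn (dvdn_trans _ kd) // order_dvdn ua.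
      apply/existsP; exists (u, v); rewrite /= !xpair_eqE; apply/and4P; split.
      - by rewrite defE.
      - by rewrite -order_dvdn (dvdn_trans _ adm) // order_dvdn ua.
      - by rewrite expgM v4 expg1n.
      - by rewrite uvi expgS uk mulg1.
Qed.
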